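(* Let $m \geq 1$ and let $d$ be a positive integer with $\gcd(d, 2^m-1)=1$. For $a \in \mathrm{GF}(2^m)$ define $$W_d(a) = \sum_{x \in \mathrm{GF}(2^m)} (-1)^{\mathrm{Tr}(x^d + a x)},$$ where $\mathrm{Tr}\colon \mathrm{GF}(2^m)\to\mathrm{GF}(2)$ is the absolute trace. Suppose that $W_d$ takes exactly three distinct values $A$, $B$, $C$ on $\mathrm{GF}(2^m)^*$, and let $N_C$ be the number of $a \in \mathrm{GF}(2^m)^*$ with $W_d(a) = C$. Let $V$ be the set of roots of $1 + x^d + (1+x)^d$ in $\mathrm{GF}(2^m)$. Then $$N_C = \frac{2^{2m} - 2^m(A+B) + (2^m-1)AB}{(C-A)(C-B)}$$ and $$2^{2m}|V| = 2^{2m}(A+B+C) - 2^m(AB+BC+CA) + (2^m-1)ABC.$$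
   Context: $W_d$ is the Walsh transform of the power map $x\mapsto x^d$ on $\mathrm{GF}(2^m)$. *)

(* Defs.v *)
From HB Require Import structures.
From mathcomp Require Import all_boot all_order all_algebra all_field.
Set Implicit Arguments. Unset Strict Implicit. Unset Printing Implicit Defensive.
Import Order.TTheory GRing.Theory Num.Theory.
Local Open Scope ring_scope.

(* Absolute trace GF(2^m) -> GF(2), with values in the prime subfield {0,1}
   of F: Tr(x) = x + x^2 + x^4 + ... + x^(2^(m-1)). *)
Definition abs_trace (F : finFieldType) (m : nat) (x : F) : F :=
  \sum_(i < m) x ^+ (2 ^ i).

Definition sgnTr (F : finFieldType) (m : nat) (y : F) : int :=
  if abs_trace m y == 0 then 1 else -1.

Definition walsh (F : finFieldType) (m d : nat) (a : F) : int :=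
  \sum_(x : F) sgnTr m (x ^+ d + a * x).

(* Main.v *)
Require Import Defs.
From HB Require Import structures.
From mathcomp Require Import all_boot all_order all_algebra all_field.
From mathcomp Require Import zify ring.
Import Order.TTheory GRing.Theory Num.Theory.
Local Open Scope ring_scope.
Set Implicit Arguments. Unset Strict Implicit.

Section Tr.
Variables (F : finFieldType) (m : nat).
Hypothesis hchar : 2%N \in [pchar F].
Hypothesis hcard : #|F| = (2 ^ m)%N.
Hypothesis hm : (1 <= m)%N.

Lemma pow2D (i : nat) (x y : F) : (x + y) ^+ (2 ^ i) = x ^+ (2 ^ i) + y ^+ (2 ^ i).
Proof.
apply: exprDn_pchar; rewrite pnatX; apply/orP; left.
rewrite (eq_pnat _ (pcharf_eq hchar)); exact: pnat_id.
Qed.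

Lemma trD (x y : F) : abs_trace m (x + y) = abs_trace m x + abs_trace m y.
Proof. by rewrite /abs_trace -big_split; apply: eq_bigr => i _; rewrite pow2D. Qed.

Lemma pow2_sum n (f : 'I_n -> F) : (\sum_(i < n) f i) ^+ 2 = \sum_(i < n) f i ^+ 2.
Proof.
elim: n f => [|n IH] f; first by rewrite !big_ord0 expr0n.
by rewrite !big_ord_recr /= (pow2D 1) IH.
Qed.

Lemma tr_sq (x : F) : abs_trace m x ^+ 2 = abs_trace m x.
Proof.
rewrite /abs_trace pow2_sum.
have -> : \sum_(i < m) (x ^+ (2 ^ i)) ^+ 2 = \sum_(i < m) x ^+ (2 ^ i.+1).
  by apply: eq_bigr => i _; rewrite -exprM expnS mulnC.
have H := @big_ord_recr F 0 +%R m (fun i => x ^+ (2 ^ i)).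
rewrite big_ord_recl /= -hcard expf_card expn0 expr1 in H.
apply: (addIr x); by rewrite addrC -H addrC.
Qed.

Lemma tr01 (x : F) : (abs_trace m x == 0) || (abs_trace m x == 1).
Proof.
have := tr_sq x; set t := abs_trace m x => h.
have : t * (t - 1) == 0 by rewrite mulrBr mulr1 -expr2 h subrr.
by rewrite mulf_eq0 subr_eq0.
Qed.
End Tr.
Section Tr2.
Variables (F : finFieldType) (m : nat).
Hypothesis hchar : 2%N \in [pchar F].
Hypothesis hcard : #|F| = (2 ^ m)%N.
Hypothesis hm : (1 <= m)%N.

Lemma tr_nonzero : exists x : F, abs_trace m x != 0.
Proof.
apply/existsP; apply: contraT; rewrite negb_exists => /forallP H.
pose p : {poly F} := \sum_(i < m) 'X^(2 ^ i).
have pn0 : p != 0.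
  apply/eqP => /(congr1 (fun q : {poly F} => q`_1)).
  rewrite coef_sum coef0 (bigD1 (Ordinal hm)) //= big1 ?addr0.
    by rewrite coefXn eqxx; apply/eqP; rewrite oner_eq0.
  move=> i ne; rewrite coefXn; case: eqP => // h.
  have: i = Ordinal hm; last by move=> e; rewrite e eqxx in ne.
  apply: val_inj => /=; move: h; case: (nat_of_ord i) => // k.
  rewrite expnS => h; exfalso; move: h; lia.
have := max_poly_roots pn0 (rs := enum F).
rewrite enum_uniq -cardE.
have -> : all (root p) (enum F).
  apply/allP => x _; move: (H x); rewrite negbK => /eqP h.
  rewrite /root horner_sum (eq_bigr (fun i : 'I_m => x ^+ (2 ^ i))).
    by apply/eqP; exact: h.
  by move=> i _; rewrite hornerXn.
move=> /(_ isT isT); apply: contraLR => _; rewrite -leqNgt.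
apply: (leq_trans (size_sum _ _ _)); apply/bigmax_leqP => i _.
by rewrite size_polyXn hcard ltn_exp2l.
Qed.

Local Notation chi := (sgnTr (F:=F) m).

Lemma tr_val (x : F) : abs_trace m x != 0 -> abs_trace m x = 1.
Proof. by case/orP: (tr01 hchar hcard x) => /eqP -> //; rewrite eqxx. Qed.

Lemma chiD (x y : F) : chi (x + y) = chi x * chi y.
Proof.
rewrite /sgnTr (trD m hchar).
case/orP: (tr01 hchar hcard x) => /eqP ->; case/orP: (tr01 hchar hcard y) => /eqP ->;
  rewrite ?addr0 ?add0r ?eqxx ?oner_eq0 ?mulr1 ?mul1r //.
by rewrite (addrr_pchar2 hchar) eqxx.
Qed.

Lemma chi_sq (x : F) : chi x * chi x = 1.
Proof. by rewrite /sgnTr; case: ifP => _; rewrite ?mulr1 ?mulrNN ?mulr1. Qed.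

Lemma tr0 : abs_trace m (0 : F) = 0.
Proof. by rewrite /abs_trace big1 // => i _; rewrite expr0n expn_eq0. Qed.

Lemma chi0 : chi 0 = 1.
Proof. by rewrite /sgnTr tr0 eqxx. Qed.

Lemma chi_sum0 : \sum_(x : F) chi x = 0.
Proof.
have [x0 hx0] := tr_nonzero.
have c0 : chi x0 = -1 by rewrite /sgnTr (negbTE hx0).
set S := \sum_(x : F) chi x.
have : S = - S.
  rewrite {1}/S (reindex_inj (addIr x0)) /=.
  by rewrite /S -sumrN; apply: eq_bigr => x _; rewrite chiD c0 mulrN1.
move=> h; lia.
Qed.

Lemma orth (c : F) : \sum_(a : F) chi (a * c) = if c == 0 then (2 ^ m)%:Z else 0.
Proof.
case: eqP => [->|/eqP cn0].
  rewrite (eq_bigr (fun _ => 1)); last by move=> a _; rewrite mulr0 chi0.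
  by rewrite sumr_const hcard -natz pmulrn.
by have := chi_sum0; rewrite (reindex_inj (mulIf cn0)).
Qed.
End Tr2.
Lemma unit_pow (F : finFieldType) (z : F) : z != 0 -> z ^+ #|F|.-1 = 1.
Proof.
move=> zn0; have := expf_card z.
have hc : #|F| = (#|F|.-1).+1 by rewrite prednK // (cardD1 0).
rewrite {1}hc exprS => h; apply: (mulfI zn0); by rewrite h mulr1.
Qed.

Lemma powinj (F : finFieldType) (d : nat) : (0 < d)%N -> coprime d (#|F|.-1) ->
  injective (fun x : F => x ^+ d).
Proof.
move=> hd hcop x y /= e.
have [x0|xn0] := eqVneq x 0.
  move: e; rewrite x0 expr0n (gtn_eqF hd) => /eqP; rewrite eq_sym expf_eq0 hd /=.
  by move/eqP.
have yn0 : y != 0.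
  apply: contra_neq xn0 => y0; move: e; rewrite y0 expr0n (gtn_eqF hd) => /eqP.
  by rewrite expf_eq0 hd /= => /eqP.
set z := x / y.
have zd : z ^+ d = 1 by rewrite /z expr_div_n e divff // expf_neq0.
have zn0 : z != 0 by rewrite /z mulf_neq0 ?invr_eq0.
case: (egcdnP (#|F|.-1) hd) => km kn h _.
move: hcop; rewrite /coprime => /eqP g1; rewrite g1 in h.
have : z = 1.
  have : z ^+ (km * d) = z ^+ (kn * #|F|.-1 + 1) by rewrite h.
  by rewrite mulnC exprM zd expr1n exprD mulnC exprM unit_pow // expr1n mul1r.
by rewrite /z => /(divr1_eq).
Qed.
Section Mom.
Variables (F : finFieldType) (m d : nat).
Hypothesis hchar : 2%N \in [pchar F].
Hypothesis hcard : #|F| = (2 ^ m)%N.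
Hypothesis hm : (1 <= m)%N.
Hypothesis hd : (0 < d)%N.
Hypothesis hcop : coprime d (#|F|.-1).

Local Notation chi := (sgnTr (F:=F) m).
Local Notation W := (walsh (F:=F) m d).
Local Notation q := ((2 ^ m)%N%:Z).

Lemma W_expand a : W a = \sum_x chi (x ^+ d) * chi (a * x).
Proof. by apply: eq_bigr => x _; rewrite (chiD hchar hcard). Qed.

Lemma inner (g : F -> int) (c : F) :
  \sum_u g u * (\sum_a chi (a * (c + u))) = g c * q.
Proof.
rewrite (eq_bigr (fun u => g u * (if u == c then q else 0))); last first.
  move=> u _; rewrite (orth hchar hcard hm) addr_eq0 (oppr_pchar2 hchar) eq_sym //.
rewrite (bigD1 c) //= eqxx big1 ?addr0 // => u /negbTE ->; by rewrite mulr0.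
Qed.

Lemma S1 : \sum_a W a = q.
Proof.
rewrite (eq_bigr _ (fun a _ => W_expand a)) exchange_big /=.
rewrite (eq_bigr (fun x => chi (x ^+ d) * \sum_a chi (a * (0 + x)))); last first.
  by move=> x _; rewrite mulr_sumr; apply: eq_bigr => a _; rewrite add0r.
by rewrite inner expr0n (gtn_eqF hd) (chi0 F m) mul1r.
Qed.

Lemma W2 a : W a ^+ 2 = \sum_x \sum_y chi (x ^+ d) * (chi (y ^+ d) * chi (a * (x + y))).
Proof.
rewrite expr2 !W_expand mulr_suml; apply: eq_bigr => x _.
rewrite mulr_sumr; apply: eq_bigr => y _.
rewrite mulrDr (chiD hchar hcard); ring.
Qed.

Lemma S2 : \sum_a W a ^+ 2 = q ^+ 2.
Proof.
rewrite (eq_bigr _ (fun a _ => W2 a)) exchange_big /=.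
rewrite (eq_bigr (fun x => chi (x ^+ d) * \sum_y chi (y ^+ d) * \sum_a chi (a * (x + y)))); last first.
  move=> x _; rewrite exchange_big mulr_sumr; apply: eq_bigr => y _.
  by rewrite !mulr_sumr.
rewrite (eq_bigr (fun x => q)); last by move=> x _; rewrite inner mulrA (chi_sq m) mul1r.
by rewrite sumr_const hcard -mulr_natl natz expr2.
Qed.

Lemma W3 a : W a ^+ 3 = \sum_x \sum_y \sum_z
   chi (x ^+ d) * chi (y ^+ d) * (chi (z ^+ d) * chi (a * ((x + y) + z))).
Proof.
rewrite exprSr W2 W_expand mulr_suml; apply: eq_bigr => x _.
rewrite mulr_suml; apply: eq_bigr => y _.
rewrite mulr_sumr; apply: eq_bigr => z _.
rewrite (mulrDr a (x + y) z) (chiD hchar hcard (a * (x + y))); ring.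
Qed.

Lemma S3 : \sum_a W a ^+ 3 =
  q * \sum_x \sum_y chi (x ^+ d) * chi (y ^+ d) * chi ((x + y) ^+ d).
Proof.
rewrite (eq_bigr _ (fun a _ => W3 a)) exchange_big /= mulr_sumr; apply: eq_bigr => x _.
rewrite exchange_big /= mulr_sumr; apply: eq_bigr => y _.
rewrite exchange_big /=.
rewrite (eq_bigr (fun z => chi (x ^+ d) * chi (y ^+ d) * (chi (z ^+ d) * \sum_a chi (a * ((x + y) + z))))); last first.
  by move=> z _; rewrite !mulr_sumr.
rewrite -mulr_sumr (inner (fun z => chi (z ^+ d))); ring.
Qed.

End Mom.
Section Cnt.
Variables (F : finFieldType) (m d : nat).
Hypothesis hchar : 2%N \in [pchar F].
Hypothesis hcard : #|F| = (2 ^ m)%N.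
Hypothesis hm : (1 <= m)%N.
Hypothesis hd : (0 < d)%N.
Hypothesis hcop : coprime d (#|F|.-1).

Local Notation chi := (sgnTr (F:=F) m).
Local Notation W := (walsh (F:=F) m d).
Local Notation q := ((2 ^ m)%N%:Z).

Lemma sum_pow (f : F -> int) : \sum_y f (y ^+ d) = \sum_y f y.
Proof. by rewrite [RHS](reindex_inj (powinj hd hcop)). Qed.

Lemma W0 : W 0 = 0.
Proof.
rewrite /walsh (eq_bigr (fun x => chi (x ^+ d))); last by move=> x _; rewrite mul0r addr0.
by rewrite (sum_pow chi) (chi_sum0 hchar hcard hm).
Qed.

Lemma Tcount : \sum_x \sum_y chi (x ^+ d) * chi (y ^+ d) * chi ((x + y) ^+ d) =
  q * (#|[set x : F | 1 + x ^+ d + (1 + x) ^+ d == 0]|)%:Z.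
Proof.
pose g (t : F) := 1 + t ^+ d + (1 + t) ^+ d.
rewrite exchange_big /=.
rewrite (eq_bigr (fun y => \sum_t chi (y ^+ d * g t))); last first.
  move=> y _; have [->|yn0] := eqVneq y 0.
    apply: eq_bigr => x _.
    by rewrite expr0n (gtn_eqF hd) /= mul0r addr0 (chi0 F m) mulr1 (chi_sq m).
  rewrite (reindex_inj (mulIf yn0)); apply: eq_bigr => t _.
  rewrite -!(chiD hchar hcard); congr chi.
  have -> : t * y + y = (1 + t) * y by rewrite mulrDl mul1r addrC.
  rewrite /g !exprMn; ring.
rewrite exchange_big /=.
rewrite (eq_bigr (fun t => if g t == 0 then q else 0)); last first.
  move=> t _; rewrite (sum_pow (fun y => chi (y * g t))).
  exact: (orth hchar hcard hm).
rewrite -big_mkcond /= sumr_const.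
rewrite -mulr_natr natz cardsE. done.
Qed.
End Cnt.
Unset Implicit Arguments. Set Strict Implicit.

Theorem proposition8 (F : finFieldType) (m d : nat) (A B C : int)
  (hchar : 2%N \in [pchar F]) (hcard : #|F| = (2 ^ m)%N) (hm : (1 <= m)%N)
  (hd : (0 < d)%N) (hcop : coprime d (2 ^ m - 1))
  (hAB : A != B) (hBC : B != C) (hAC : A != C)
  (hvals : forall a : F, a != 0 ->
     [|| walsh m d a == A, walsh m d a == B | walsh m d a == C])
  (hA : exists2 a : F, a != 0 & walsh m d a = A)
  (hB : exists2 a : F, a != 0 & walsh m d a = B)
  (hC : exists2 a : F, a != 0 & walsh m d a = C) :
  let NC := #|[set a : F | (a != 0) && (walsh m d a == C)]| in
  let V := [set x : F | 1 + x ^+ d + (1 + x) ^+ d == 0] in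
  let q : int := (2 ^ m)%:Z in
  (NC%:R : rat) =
    ((q ^+ 2 - q * (A + B) + (q - 1) * A * B)%:~R / ((C - A) * (C - B))%:~R)
  /\ q ^+ 2 * (#|V|%:Z) =
     q ^+ 2 * (A + B + C) - q * (A * B + B * C + C * A) + (q - 1) * A * B * C.
Proof.
move=> NC V q.
have hcop' : coprime d (#|F|.-1) by rewrite hcard -subn1.

have s1 := S1 hchar hcard hm hd.
have s2 := S2 d hchar hcard hm.
have s3 := S3 d hchar hcard hm.
rewrite (Tcount hchar hcard hm hd hcop') in s3.
have w0 := W0 hchar hcard hm hd hcop'.
have split0 (f : int -> int) : \sum_(a : F) f (walsh m d a) = f 0 + \sum_(a : F | a != 0) f (walsh m d a).
  by rewrite (bigD1 (0:F)) //= w0.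
have hsumC (f : int -> int) : f A = 0 -> f B = 0 ->
    \sum_(a : F | a != 0) f (walsh m d a) = f C *+ NC.
  move=> fA fB.
  rewrite (eq_bigr (fun a => if walsh m d a == C then f C else 0)); last first.
    move=> a an0; case/or3P: (hvals a an0) => /eqP e; rewrite e.
    - by rewrite fA (negbTE hAC).
    - by rewrite fB (negbTE hBC).
    - by rewrite eqxx.
  rewrite -big_mkcondr /= sumr_const; congr (_ *+ _).
  by rewrite /NC; apply: eq_card => x; rewrite inE.
rewrite -/q in s1 s2 s3; rewrite -/V in s3.
have cst (c : int) : \sum_(a : F) c = c * q by rewrite sumr_const hcard -mulr_natr natz.
have E2 : \sum_(a : F) (walsh m d a - A) * (walsh m d a - B) = q ^+ 2 - (A + B) * q + A * B * q.
  rewrite (eq_bigr (fun a => walsh m d a ^+ 2 - (A + B) * walsh m d a + A * B)); last by move=> a _; ring.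
  by rewrite big_split sumrB /= -mulr_sumr s1 s2 cst.
have L2 : \sum_(a : F) (walsh m d a - A) * (walsh m d a - B) = A * B + ((C - A) * (C - B)) *+ NC.
  rewrite (split0 (fun w => (w - A) * (w - B))) (hsumC (fun w => (w - A) * (w - B))).
  - by rewrite sub0r sub0r mulrNN.
  - by rewrite subrr mul0r.
  - by rewrite subrr mulr0.
have E3 : \sum_(a : F) (walsh m d a - A) * (walsh m d a - B) * (walsh m d a - C) =
   q * (q * #|V|%:Z) - (A + B + C) * q ^+ 2 + (A * B + B * C + C * A) * q - A * B * C * q.
  rewrite (eq_bigr (fun a => walsh m d a ^+ 3 - (A + B + C) * walsh m d a ^+ 2
     + (A * B + B * C + C * A) * walsh m d a - A * B * C)); last by move=> a _; ring.
  by rewrite sumrB big_split sumrB /= -!mulr_sumr s1 s2 s3 cst; ring.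
have L3 : \sum_(a : F) (walsh m d a - A) * (walsh m d a - B) * (walsh m d a - C) = - (A * B * C).
  rewrite (split0 (fun w => (w - A) * (w - B) * (w - C))) (hsumC (fun w => (w - A) * (w - B) * (w - C))).
  - by rewrite subrr mulr0 mul0rn addr0; ring.
  - by rewrite subrr mul0r mul0r.
  - by rewrite subrr mulr0 mul0r.
split.
  have hX : (C - A) * (C - B) * NC%:Z = q ^+ 2 - q * (A + B) + (q - 1) * A * B.
    have h := etrans (esym L2) E2; rewrite -mulr_natr natz in h.
    apply: (addrI (A * B)); rewrite h; ring.
  have hK : ((C - A) * (C - B))%:~R != 0 :> rat.
    by rewrite intr_eq0 mulf_neq0 // subr_eq0 eq_sym.
  by rewrite -hX intrM mulrAC divff // mul1r.

have h := etrans (esym E3) L3.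
have h' : q * (q * #|V|%:Z) = - (A * B * C) + ((A + B + C) * q ^+ 2 - (A * B + B * C + C * A) * q + A * B * C * q).
  by rewrite -h; ring.
by rewrite (expr2 q) -mulrA h'; ring.
Qed.
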